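(* Let $d\ge 1$, $\boldsymbol{w}\in\mathbb{R}^d\setminus\{\boldsymbol{0}\}$, $b\in\mathbb{R}$, and let $C(\boldsymbol{x})=\mathbf{1}\{\boldsymbol{w}\cdot\boldsymbol{x}+b>0\}$ be the linear classifier. Let $\boldsymbol{\mu}_0\in\mathbb{R}^d$ be a unit vector, with sign chosen so that $\boldsymbol{w}\cdot\boldsymbol{\mu}_0\ge 0$. Let $\varepsilon>0$, $\delta\ge 0$. Put $\boldsymbol{v}_0=\boldsymbol{w}/\|\boldsymbol{w}\|$, let $\theta\in[0,\pi/2]$ be the angle with $\cos\theta=\boldsymbol{v}_0\cdot\boldsymbol{\mu}_0$, let $\boldsymbol{n}_0=\boldsymbol{n}/\|\boldsymbol{n}\|$ with $\boldsymbol{n}=\boldsymbol{v}_0-(\boldsymbol{v}_0\cdot\boldsymbol{\mu}_0)\boldsymbol{\mu}_0$ (if $\boldsymbol{n}=\boldsymbol{0}$, let $\boldsymbol{n}_0$ be any unit vector orthogonal to $\boldsymbol{\mu}_0$), so that $\boldsymbol{v}_0=\cos\theta\,\boldsymbol{\mu}_0+\sin\theta\,\boldsymbol{n}_0$. Let $\beta=\min(\varepsilon\cos\theta,\delta)$ and $\boldsymbol{u}_2=\beta\boldsymbol{\mu}_0+\sqrt{\varepsilon^2-\beta^2}\,\boldsymbol{n}_0$. Then $$\Omega_\varepsilon=\Omega(\varepsilon\boldsymbol{v}_0)\cup\Omega(-\varepsilon\boldsymbol{v}_0),\qquad \Omega_{\varepsilon,\delta}=\Omega(\boldsymbol{u}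_2)\cup\Omega(-\boldsymbol{u}_2).$$
   Context: All norms are Euclidean ($\ell_2$). For $\boldsymbol{v}\in\mathbb{R}^d$, $\Omega(\boldsymbol{v})=\{\boldsymbol{x}\in\mathbb{R}^d: C(\boldsymbol{x}+\boldsymbol{v})\neq C(\boldsymbol{x})\}$. A point $\boldsymbol{x}'$ is an $\varepsilon$-adversarial example of $\boldsymbol{x}$ if $\|\boldsymbol{x}-\boldsymbol{x}'\|\le\varepsilon$ and $C(\boldsymbol{x})\ne C(\boldsymbol{x}')$; it is an $(\varepsilon,\delta)$-strong-adversarial example of $\boldsymbol{x}$ if moreover $|(\boldsymbol{x}-\boldsymbol{x}')\cdot\boldsymbol{\mu}_0|\le\delta$. $\Omega_\varepsilon$ is the set of $\boldsymbol{x}$ having an $\varepsilon$-adversarial example and $\Omega_{\varepsilon,\delta}$ the set of $\boldsymbol{x}$ having an $(\varepsilon,\delta)$-strong-adversarial example. ($\boldsymbol{\mu}_0$ plays the role of the ''signal direction''; since the strong-adversarial condition is invariant under $\boldsymbol{\mu}_0\mapsto-\boldsymbol{\mu}_0$, its sign is fixed so that the angle $\theta$ lies in $[0,\pi/2]$.) *)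

(* Defs.v *)
From HB Require Import structures.
From mathcomp Require Import all_boot all_order all_algebra.
From mathcomp Require Import classical_sets reals.
Set Implicit Arguments. Unset Strict Implicit. Unset Printing Implicit Defensive.
Import Order.TTheory GRing.Theory Num.Theory.
Local Open Scope ring_scope.
Local Open Scope classical_set_scope.

Section Defs.
Variables (R : realType) (d : nat).
Implicit Types (u v x w mu : 'rV[R]_d).

Definition dot u v : R := \sum_(i < d) u 0 i * v 0 i.
Definition enorm u : R := Num.sqrt (dot u u).

Definition lin_clf w (b : R) : 'rV[R]_d -> bool := fun x => 0 < dot w x + b.

Definition Omega (C : 'rV[R]_d -> bool) v : set 'rV[R]_d :=
  [set x | C (x + v) <> C x].

Definition adv_example (C : 'rV[R]_d -> bool) (eps : R) x x' : Prop :=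
  enorm (x - x') <= eps /\ C x <> C x'.

Definition strong_adv_example (C : 'rV[R]_d -> bool) (mu0 : 'rV[R]_d)
  (eps delta : R) x x' : Prop :=
  adv_example C eps x x' /\ `|dot (x - x') mu0| <= delta.

Definition Omega_eps (C : 'rV[R]_d -> bool) (eps : R) : set 'rV[R]_d :=
  [set x | exists x', adv_example C eps x x'].

Definition Omega_eps_delta (C : 'rV[R]_d -> bool) (mu0 : 'rV[R]_d)
  (eps delta : R) : set 'rV[R]_d :=
  [set x | exists x', strong_adv_example C mu0 eps delta x x'].
End Defs.

(* Main.v *)
Require Import Defs.
From HB Require Import structures.
From mathcomp Require Import all_boot all_order all_algebra.
From mathcomp Require Import classical_sets reals.
From mathcomp Require Import ring lra.
Import Order.TTheory GRing.Theory Num.Theory.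
Local Open Scope ring_scope.
Local Open Scope classical_set_scope.
Lemma key (R : realType) (c s0 s t e dl tau be : R) :
  0 <= c -> 0 <= s0 -> c^+2 + s0^+2 = 1 -> s^+2 + t^+2 <= e^+2 ->
  `|s| <= dl -> 0 < e -> 0 <= dl -> 0 <= tau -> tau^+2 = e^+2 - be^+2 ->
  (be = e*c /\ e*c <= dl \/ be = dl /\ dl <= e*c) ->
  c*s + s0*t <= c*be + s0*tau.
Proof.
move=> c0 s00 cs st sd e0 d0 t0 tt [[hb _]|[hb hd]]; rewrite hb in tt *.
- have es : tau^+2 = (e*s0)^+2.
    have h : s0^+2 = 1 - c^+2 by lra.
    by rewrite tt !exprMn h; ring.
  have es0 : 0 <= e * s0 by apply: mulr_ge0; lra.
  have -> : tau = e * s0.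
    apply/eqP; rewrite -(eqrXn2 (n:=2)) //; exact/eqP.
  have id : (c*s+s0*t)^+2 + (c*t-s0*s)^+2 = (c^+2+s0^+2)*(s^+2+t^+2) by ring.
  rewrite cs mul1r in id.
  have h3 : (c*s+s0*t)^+2 <= e^+2.
    have := sqr_ge0 (c*t - s0*s); lra.
  have h4 : c*s+s0*t <= e by nra.
  have -> : c * (e * c) + s0 * (e * s0) = e * (c^+2 + s0^+2) by ring.
  by rewrite cs mulr1.
- have sl : s <= dl by apply: le_trans (ler_norm s) sd.
  have [tz|tp] := eqVneq tau 0.
    rewrite tz in tt *.
    have hdl : dl = e.
      apply/eqP; rewrite -(eqrXn2 (n:=2)) //; [apply/eqP; lra | lra].
    have c1 : 1 <= c by rewrite hdl in hd; nra.
    have hs2 : s0^+2 <= 0 by nra.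
    have hs : s0 = 0.
      apply/eqP; rewrite -sqrf_eq0; apply/eqP/le_anti; rewrite hs2 sqr_ge0 //.
    rewrite hs; nra.
  have tp' : 0 < tau by rewrite lt_def tp t0.
  have h1 : s0 * dl <= c * tau.
    have hh : (s0*dl)^+2 <= (c*tau)^+2 by nra.
    have a1 : 0 <= s0 * dl by apply: mulr_ge0.
    have a2 : 0 <= c * tau by apply: mulr_ge0.
    nra.
  have h2 : dl * s + tau * t <= e^+2.
    have id : (dl*s+tau*t)^+2 + (dl*t-tau*s)^+2 = (dl^+2+tau^+2)*(s^+2+t^+2) by ring.
    have hh : (dl*s+tau*t)^+2 <= (e^+2)^+2.
      have E : dl^+2 + tau^+2 = e^+2 by lra.
      rewrite E in id.
      have := sqr_ge0 (dl*t-tau*s).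
      have a2 : 0 <= e^+2 by apply: sqr_ge0.
      have : e^+2 * (s^+2+t^+2) <= e^+2 * e^+2 by apply: ler_wpM2l.
      rewrite expr2; lra.
    have a2 : 0 <= e^+2 by apply: sqr_ge0.
    nra.
  have h3 : tau * (c*s + s0*t) <= tau * (c*dl + s0*tau).
    have e1 : tau * (c*s + s0*t) = (c*tau - s0*dl)*s + s0*(dl*s+tau*t) by ring.
    have e2 : tau * (c*dl + s0*tau) = (c*tau - s0*dl)*dl + s0*e^+2 by rewrite (_ : e^+2 = tau^+2 + dl^+2); [ring | lra].
    rewrite e1 e2; apply: lerD; [apply: ler_wpM2l; lra | apply: ler_wpM2l; lra].
  by rewrite ler_pM2l in h3.
Qed.

Section Dot.
Variables (R : realType) (d : nat).
Implicit Types (u v x : 'rV[R]_d).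

Lemma dotC u v : dot u v = dot v u.
Proof. by rewrite /dot; apply: eq_bigr => i _; rewrite mulrC. Qed.
Lemma dotDl u v x : dot (u + v) x = dot u x + dot v x.
Proof. by rewrite /dot -big_split; apply: eq_bigr => i _; rewrite mxE mulrDl. Qed.
Lemma dotZl (k : R) u v : dot (k *: u) v = k * dot u v.
Proof. by rewrite /dot mulr_sumr; apply: eq_bigr => i _; rewrite mxE mulrA. Qed.
Lemma dotNl u v : dot (- u) v = - dot u v.
Proof. by rewrite /dot -sumrN; apply: eq_bigr => i _; rewrite mxE mulNr. Qed.
Lemma dotBl u v x : dot (u - v) x = dot u x - dot v x.
Proof. by rewrite dotDl dotNl. Qed.
Lemma dotDr u v x : dot x (u + v) = dot x u + dot x v.
Proof. by rewrite dotC dotDl !(dotC x). Qed.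
Lemma dotZr (k : R) u v : dot v (k *: u) = k * dot v u.
Proof. by rewrite dotC dotZl dotC. Qed.
Lemma dotNr u v : dot v (- u) = - dot v u.
Proof. by rewrite dotC dotNl dotC. Qed.
Lemma dotBr u v x : dot x (u - v) = dot x u - dot x v.
Proof. by rewrite dotDr dotNr. Qed.
Lemma dot_ge0 u : 0 <= dot u u.
Proof. by apply: sumr_ge0 => i _; rewrite -expr2 sqr_ge0. Qed.
Lemma dot_eq0 u : dot u u = 0 -> u = 0.
Proof.
move=> h; apply/matrixP => i j; rewrite !mxE.
have H : forall k : 'I_d, true -> 0 <= u 0 k * u 0 k.
  by move=> k _; rewrite -expr2 sqr_ge0.
have /eqP := psumr_eq0P H h (i:=j) isT.
by rewrite mulf_eq0 orbb (ord1 i) => /eqP.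
Qed.
Lemma enormN u : enorm (- u) = enorm u.
Proof. by rewrite /enorm dotNl dotNr opprK. Qed.
Lemma enorm_le u (e : R) : 0 <= e -> (enorm u <= e) <-> (dot u u <= e ^+ 2).
Proof.
move=> e0; have h1 := sqr_sqrtr (dot_ge0 u); have h2 := sqrtr_ge0 (dot u u).
rewrite /enorm; split => h; nra.
Qed.
End Dot.
Arguments dotC {R d}.
Arguments dotDl {R d}.
Arguments dotZl {R d}.
Arguments dotNl {R d}.
Arguments dotBl {R d}.
Arguments dotDr {R d}.
Arguments dotZr {R d}.
Arguments dotNr {R d}.
Arguments dotBr {R d}.
Arguments dot_ge0 {R d}.
Arguments dot_eq0 {R d}.
Arguments enormN {R d}.
Arguments enorm_le {R d}.

Lemma gen (R : realType) (d : nat) (w : 'rV[R]_d) (b : R) (P : 'rV[R]_d -> Prop) u :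
  (forall y, P y -> P (- y)) -> P u -> (forall y, P y -> dot w y <= dot w u) ->
  [set x | exists x', P (x - x') /\ lin_clf w b x <> lin_clf w b x'] =
  Omega (lin_clf w b) u `|` Omega (lin_clf w b) (- u).
Proof.
move=> PN Pu Hb; apply/seteqP; split => x /=.
- move=> [x' [Px Cx]]; rewrite /Omega /lin_clf /= in Cx *.
  have E : dot w x' = dot w x - dot w (x - x') by rewrite dotBr opprB addrC subrK.
  have E' : - (x - x') = x' - x by rewrite opprB.
  have H1 := Hb _ Px; have H2 := Hb _ (PN _ Px); rewrite E' in H2.
  have E2 : dot w (x' - x) = dot w x' - dot w x by rewrite dotBr.
  case: (ltrP 0 (dot w x + b)) Cx => hx Cx.
  + right; rewrite dotDr dotNr.
    case: (ltrP 0 (dot w x' + b)) Cx => hx' //= _.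
    apply/negP; rewrite -leNgt; lra.
  + left; rewrite dotDr.
    case: (ltrP 0 (dot w x' + b)) Cx => hx' //= _.
    have -> : 0 < dot w x + dot w u + b by lra.
    by [].
- case => /= h.
  + exists (x + u); split; last by move=> e; apply: h; rewrite e.
    by rewrite opprD addrA subrr add0r; apply: PN.
  + exists (x - u); split; last by move=> e; apply: h; rewrite e.
    by rewrite opprB addrC subrK.
Qed.

Theorem lemma1 (R : realType) (d : nat) (w : 'rV[R]_d) (b : R)
  (mu0 n0 : 'rV[R]_d) (eps delta : R) :
  (0 < d)%N -> w != 0 ->
  enorm mu0 = 1 -> 0 <= dot w mu0 ->
  0 < eps -> 0 <= delta ->
  let v0 := (enorm w)^-1 *: w in
  let costh := dot v0 mu0 in
  let n := v0 - costh *: mu0 in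
  (* n0 = n/|n| if n <> 0, otherwise an arbitrary unit vector orthogonal to mu0 *)
  (if n != 0 then n0 = (enorm n)^-1 *: n
   else enorm n0 = 1 /\ dot n0 mu0 = 0) ->
  let beta := Num.min (eps * costh) delta in
  let u2 := beta *: mu0 + Num.sqrt (eps ^+ 2 - beta ^+ 2) *: n0 in
  let C := lin_clf w b in
  Omega_eps C eps = Omega C (eps *: v0) `|` Omega C (- (eps *: v0)) /\
  Omega_eps_delta C mu0 eps delta = Omega C u2 `|` Omega C (- u2).
Proof.
move=> d0 w0 mu1 wmu e0 dl0 v0 c n Hn0 beta u2 C.
have dww : 0 < dot w w.
  rewrite lt_def dot_ge0 andbT; apply/eqP => /dot_eq0 h; by rewrite h eqxx in w0.
set a := enorm w.
have a0 : 0 < a by rewrite /a /enorm sqrtr_gt0.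
have aa : a ^+ 2 = dot w w by rewrite /a /enorm sqr_sqrtr // ltW.
have wv : w = a *: v0 by rewrite /v0 -/a scalerA mulfV ?gt_eqF // scale1r.
have v1 : dot v0 v0 = 1.
  rewrite /v0 -/a dotZl dotZr -aa; field; exact: lt0r_neq0.
have m1 : dot mu0 mu0 = 1.
  by rewrite -(sqr_sqrtr (dot_ge0 mu0)) -/(enorm mu0) mu1 expr1n.
have c0 : 0 <= c by rewrite /c /v0 dotZl; apply: mulr_ge0 => //; rewrite invr_ge0 ltW.
clearbody v0.
have [s0 [s00 [Hv [n1 [nm cs]]]]] : exists s0, 0 <= s0 /\ v0 = c *: mu0 + s0 *: n0 /\
    dot n0 n0 = 1 /\ dot n0 mu0 = 0 /\ c ^+ 2 + s0 ^+ 2 = 1.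
  move: Hn0; case: eqVneq => [n_0 | nn0] /= Hn0.
  - have vc : v0 = c *: mu0 by apply: subr0_eq.
    exists 0; split => //; split; first by rewrite scale0r addr0.
    case: Hn0 => hn1 ->; split; last split => //.
      by rewrite -(sqr_sqrtr (dot_ge0 n0)) -/(enorm n0) hn1 expr1n.
    by rewrite expr0n /= addr0 -v1 vc dotZl dotZr m1 mulr1 expr2.
  - have dnn : 0 < dot n n.
      rewrite lt_def dot_ge0 andbT; apply/eqP => /dot_eq0 h; by rewrite h eqxx in nn0.
    have sn0 : 0 < enorm n by rewrite /enorm sqrtr_gt0.
    have sn2 : enorm n ^+ 2 = dot n n by rewrite /enorm sqr_sqrtr // ltW.
    have dnm : dot n mu0 = 0 by rewrite (_ : n = v0 - c *: mu0) // dotBl dotZl m1 mulr1 /c subrr.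
    exists (enorm n); split; first exact: ltW.
    split; first by rewrite Hn0 scalerA mulfV ?gt_eqF // scale1r /n addrC subrK.
    split.
      rewrite Hn0 dotZl dotZr -sn2; field; exact: lt0r_neq0.
    split; first by rewrite Hn0 dotZl dnm mulr0.
    have nE : n = v0 - c *: mu0 by [].
    rewrite sn2 nE dotBl !dotBr !dotZl !dotZr v1 m1 (dotC mu0 v0) -/c; ring.
have dwy : forall y, dot w y = a * (c * dot mu0 y + s0 * dot n0 y).
  by move=> y; rewrite wv dotZl Hv dotDl !dotZl.
split.
  have -> : Omega_eps C eps = [set x | exists x', (fun y => enorm y <= eps) (x - x') /\ C x <> C x'] by [].
  apply: (@gen _ _ _ _ (fun y => enorm y <= eps)).
  - by move=> y; rewrite enormN.
  - by rewrite (enorm_le _ _ (ltW e0)) dotZl dotZr v1 mulr1 expr2.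
  - move=> y hy; have {}hy := (enorm_le _ _ (ltW e0)).1 hy.
    rewrite wv !dotZl dotZr v1 mulr1.
    apply: ler_wpM2l; first exact: ltW.
    have := dot_ge0 (eps *: v0 - y).
    rewrite !dotBl !dotBr !dotZl !dotZr v1 (dotC y v0) => h.
    nra.
have hb : beta = eps * c /\ eps * c <= delta \/ beta = delta /\ delta <= eps * c.
  rewrite /beta minEle; case: leP => h; [left|right]; split => //; exact: ltW.
have c1 : c <= 1 by nra.
have b0 : 0 <= beta.
  case: hb => [[hb' _]|[hb' _]]; rewrite hb' //; apply: mulr_ge0 => //; exact: ltW.
have bd : beta <= delta by case: hb => [[hb' h]|[hb' _]]; rewrite hb'.
have be : beta <= eps.
  case: hb => [[hb' _]|[hb' h]]; rewrite hb'; nra.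
set tau := Num.sqrt (eps ^+ 2 - beta ^+ 2).
have t0 : 0 <= tau := sqrtr_ge0 _.
have tt : tau ^+ 2 = eps ^+ 2 - beta ^+ 2 by rewrite sqr_sqrtr //; nra.
have mn : dot mu0 n0 = 0 by rewrite dotC.
have u2m : dot u2 mu0 = beta by rewrite /u2 dotDl !dotZl m1 nm; ring.
have Pdef : Omega_eps_delta C mu0 eps delta = [set x | exists x',
   (fun y => enorm y <= eps /\ `|dot y mu0| <= delta) (x - x') /\ C x <> C x'].
  apply/seteqP; split => x /= [x' H]; exists x'.
    by case: H => [[h1 h2] h3].
  by case: H => [[h1 h2] h3].
rewrite Pdef; apply: (@gen _ _ _ _ (fun y => enorm y <= eps /\ `|dot y mu0| <= delta)).
- by move=> y [h1 h2]; rewrite enormN dotNl normrN.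
- split; last by rewrite u2m ger0_norm.
  rewrite (enorm_le _ _ (ltW e0)) /u2 !dotDl !dotDr !dotZl !dotZr m1 n1 nm mn.
  rewrite -/tau; move: tt; rewrite !expr2 => tt; nra.
- move=> y [hy hs]; have {}hy := (enorm_le _ _ (ltW e0)).1 hy.
  rewrite !dwy; apply: ler_wpM2l; first exact: ltW.
  have -> : dot mu0 u2 = beta by rewrite dotC.
  have -> : dot n0 u2 = tau by rewrite /u2 dotDr !dotZr nm n1 -/tau; ring.
  apply: (@key R c s0 (dot mu0 y) (dot n0 y) eps delta tau beta c0 s00 cs _ _ e0 dl0 t0 tt hb); last by rewrite dotC.
  set s := dot mu0 y; set t := dot n0 y.
  have := dot_ge0 (y - s *: mu0 - t *: n0).
  rewrite !dotBl !dotBr !dotZl !dotZr m1 n1 nm mn (dotC y mu0) (dotC y n0) -/s -/t.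
  nra.
Qed.
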